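(* Let $\underline c<\overline c$ and $\underline s<\overline s$ be real numbers and write $\phi(c,s)=\sqrt{c^2+s^2}$. Suppose $$\phi(\overline c,\overline s)+\phi(\underline c,\underline s)-\phi(\overline c,\underline s)-\phi(\underline c,\overline s)>0.$$ Define $\eta^3=\frac{\phi(\overline c,\overline s)-\phi(\underline c,\overline s)}{\overline c-\underline c}$, $\delta^3=\frac{\phi(\underline c,\overline s)-\phi(\underline c,\underline s)}{\overline s-\underline s}$, $\nu^3=\phi(\underline c,\underline s)-\eta^3\underline c-\delta^3\underline s$, and $\eta^4=\frac{\phi(\overline c,\underline s)-\phi(\underline c,\underline s)}{\overline c-\underline c}$, $\delta^4=\frac{\phi(\overline c,\overline s)-\phi(\overline c,\underline s)}{\overline s-\underline s}$, $\nu^4=\phi(\overline c,\overline s)-\eta^4\overline c-\delta^4\overline s$. Then for $n=3,4$ and all $(c,s)\in[\underline c,\overline c]\times[\underline s,\overline s]$ we have $\nu^n+\eta^n c+\delta^n s\ge \sqrt{c^2+s^2}$. *)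

(* Defs.v *)
From Stdlib Require Import Reals.
Open Scope R_scope.

Definition phi (c s : R) : R := sqrt (c ^ 2 + s ^ 2).

Definition eta3 (cl cu sl su : R) : R := (phi cu su - phi cl su) / (cu - cl).
Definition delta3 (cl cu sl su : R) : R := (phi cl su - phi cl sl) / (su - sl).
Definition nu3 (cl cu sl su : R) : R :=
  phi cl sl - eta3 cl cu sl su * cl - delta3 cl cu sl su * sl.

Definition eta4 (cl cu sl su : R) : R := (phi cu sl - phi cl sl) / (cu - cl).
Definition delta4 (cl cu sl su : R) : R := (phi cu su - phi cu sl) / (su - sl).
Definition nu4 (cl cu sl su : R) : R :=
  phi cu su - eta4 cl cu sl su * cu - delta4 cl cu sl su * su.

(* Main.v *)
Require Import Defs.
From Stdlib Require Import Reals Lra Psatz.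
Open Scope R_scope.

Lemma cs_aux x1 y1 x2 y2 A B : 0 <= A -> 0 <= B ->
  A*A = x1^2+y1^2 -> B*B = x2^2+y2^2 -> x1*x2+y1*y2 <= A*B.
Proof.
  intros HA HB EA EB.
  destruct (Rle_dec (x1*x2+y1*y2) (A*B)) as [h|h]; [exact h|].
  exfalso. apply Rnot_le_lt in h.
  assert (HAB : 0 <= A*B) by nra.
  assert ((A*B)*(A*B) < (x1*x2+y1*y2)*(x1*x2+y1*y2)) by nra.
  assert ((A*B)*(A*B) = (x1^2+y1^2)*(x2^2+y2^2)) by (rewrite <- EA, <- EB; ring).
  assert ((x1^2+y1^2)*(x2^2+y2^2) = (x1*x2+y1*y2)*(x1*x2+y1*y2) + (x1*y2-x2*y1)^2) by ring.
  assert (0 <= (x1*y2-x2*y1)^2) by apply pow2_ge_0.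
  lra.
Qed.

Lemma phi_tri x1 y1 x2 y2 : phi (x1+x2) (y1+y2) <= phi x1 y1 + phi x2 y2.
Proof.
  unfold phi.
  set (A := sqrt (x1^2+y1^2)). set (B := sqrt (x2^2+y2^2)).
  assert (HA : 0 <= A) by apply sqrt_pos.
  assert (HB : 0 <= B) by apply sqrt_pos.
  assert (EA : A*A = x1^2+y1^2) by (apply sqrt_sqrt; nra).
  assert (EB : B*B = x2^2+y2^2) by (apply sqrt_sqrt; nra).
  pose proof (cs_aux x1 y1 x2 y2 A B HA HB EA EB).
  rewrite <- (sqrt_pow2 (A+B)) by lra.
  apply sqrt_le_1_alt. nra.
Qed.

Lemma phi_scale w x y : 0 <= w -> phi (w*x) (w*y) = w * phi x y.
Proof.
  intro Hw. unfold phi.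
  replace ((w*x)^2 + (w*y)^2) with ((w*w) * (x^2+y^2)) by ring.
  rewrite sqrt_mult_alt by nra. rewrite sqrt_square by lra. reflexivity.
Qed.

Lemma phi_conv4 w1 w2 w3 w4 x1 y1 x2 y2 x3 y3 x4 y4 :
  0 <= w1 -> 0 <= w2 -> 0 <= w3 -> 0 <= w4 ->
  phi (w1*x1+w2*x2+w3*x3+w4*x4) (w1*y1+w2*y2+w3*y3+w4*y4)
  <= w1*phi x1 y1 + w2*phi x2 y2 + w3*phi x3 y3 + w4*phi x4 y4.
Proof.
  intros H1 H2 H3 H4.
  rewrite <- (phi_scale w1), <- (phi_scale w2), <- (phi_scale w3), <- (phi_scale w4) by assumption.
  eapply Rle_trans; [apply phi_tri|].
  apply Rplus_le_compat_r.
  eapply Rle_trans; [apply phi_tri|].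
  apply Rplus_le_compat_r.
  apply phi_tri.
Qed.

Theorem proposition5 (cl cu sl su : R) :
  cl < cu -> sl < su ->
  phi cu su + phi cl sl - phi cu sl - phi cl su > 0 ->
  forall c s : R, cl <= c <= cu -> sl <= s <= su ->
    nu3 cl cu sl su + eta3 cl cu sl su * c + delta3 cl cu sl su * s
      >= sqrt (c ^ 2 + s ^ 2) /\
    nu4 cl cu sl su + eta4 cl cu sl su * c + delta4 cl cu sl su * s
      >= sqrt (c ^ 2 + s ^ 2).
Proof.
  intros Hc Hs Hp c s [Hc1 Hc2] [Hs1 Hs2].
  set (a := (c - cl) / (cu - cl)). set (b := (s - sl) / (su - sl)).
  assert (Ea : c = cl + a * (cu - cl)) by (unfold a; field; lra).
  assert (Eb : s = sl + b * (su - sl)) by (unfold b; field; lra).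
  assert (Ha0 : 0 <= a) by (unfold a; apply Rmult_le_pos; [lra | left; apply Rinv_0_lt_compat; lra]).
  assert (Hb0 : 0 <= b) by (unfold b; apply Rmult_le_pos; [lra | left; apply Rinv_0_lt_compat; lra]).
  assert (Ha1 : a <= 1).
  { unfold a. apply (Rmult_le_reg_r (cu - cl)); [lra|]. field_simplify; lra. }
  assert (Hb1 : b <= 1).
  { unfold b. apply (Rmult_le_reg_r (su - sl)); [lra|]. field_simplify; lra. }
  set (P := phi cl sl). set (Q := phi cu sl). set (Rr := phi cl su). set (S := phi cu su).
  fold P Q Rr S in Hp.
  pose proof (phi_conv4 ((1-a)*(1-b)) (a*(1-b)) ((1-a)*b) (a*b)
     cl sl cu sl cl su cu su ltac:(nra) ltac:(nra) ltac:(nra) ltac:(nra)) as Hconv.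
  fold P Q Rr S in Hconv.
  replace ((1-a)*(1-b)*cl + a*(1-b)*cu + (1-a)*b*cl + a*b*cu) with c in Hconv by (rewrite Ea; ring).
  replace ((1-a)*(1-b)*sl + a*(1-b)*sl + (1-a)*b*su + a*b*su) with s in Hconv by (rewrite Eb; ring).
  unfold phi in Hconv at 1.
  split.
  - assert (E3 : nu3 cl cu sl su + eta3 cl cu sl su * c + delta3 cl cu sl su * s
                 = P + a*(S-Rr) + b*(Rr-P)).
    { unfold nu3, eta3, delta3. fold P Q Rr S. rewrite Ea, Eb. field. lra. }
    rewrite E3. apply Rle_ge. eapply Rle_trans; [exact Hconv|].
    assert (0 <= a*(1-b)) by nra. nra.
  - assert (E4 : nu4 cl cu sl su + eta4 cl cu sl su * c + delta4 cl cu sl su * s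
                 = S - (1-a)*(Q-P) - (1-b)*(S-Q)).
    { unfold nu4, eta4, delta4. fold P Q Rr S. rewrite Ea, Eb. field. lra. }
    rewrite E4. apply Rle_ge. eapply Rle_trans; [exact Hconv|].
    assert (0 <= (1-a)*b) by nra. nra.
Qed.
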